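(* There exists a recursive subset $\mathcal{A}\subseteq\mathbb{Z}$ which is closed in the profinite topology of $\mathbb{Z}$ and such that the function $n\mapsto\mathcal{A}\bmod n$ (for $n\ge1$) is not recursive.
   Context: $\mathcal{A}\bmod n=\{r\in\{0,\dots,n-1\}:\exists x\in\mathcal{A},\ x\equiv r\bmod n\}$. The profinite topology on $\mathbb{Z}$ has as basis of open sets the arithmetic progressions $m+p\mathbb{Z}$ ($m\in\mathbb{Z}$, $p\ge1$). *)

(* Defs.v *)
From Stdlib Require Import ZArith List Arith.
Import ListNotations.
Open Scope Z_scope.

Inductive code : Type :=
  | CZero : code
  | CSucc : code
  | CProj : nat -> code
  | CComp : code -> list code -> code
  | CRec  : code -> code -> code        (* primitive recursion on first argument *)
  | CMu   : code -> code.               (* least y with f (y :: xs) = 0 *)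

Inductive eval : code -> list nat -> nat -> Prop :=
  | ev_zero : forall xs, eval CZero xs 0
  | ev_succ : forall x xs, eval CSucc (x :: xs) (S x)
  | ev_proj : forall i xs, eval (CProj i) xs (nth i xs 0%nat)
  | ev_comp : forall f gs xs ys y,
      evalL gs xs ys -> eval f ys y -> eval (CComp f gs) xs y
  | ev_rec0 : forall f g xs y, eval f xs y -> eval (CRec f g) (0%nat :: xs) y
  | ev_recS : forall f g n xs r y,
      eval (CRec f g) (n :: xs) r -> eval g (n :: r :: xs) y ->
      eval (CRec f g) (S n :: xs) y
  | ev_mu : forall f xs y,
      eval f (y :: xs) 0%nat ->
      (forall z, (z < y)%nat -> exists v, eval f (z :: xs) (S v)) ->
      eval (CMu f) xs y
with evalL : list code -> list nat -> list nat -> Prop :=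
  | evL_nil : forall xs, evalL [] xs []
  | evL_cons : forall g gs xs y ys,
      eval g xs y -> evalL gs xs ys -> evalL (g :: gs) xs (y :: ys).

Definition Z_to_nat (z : Z) : nat :=
  if 0 <=? z then Z.to_nat (2 * z) else Z.to_nat (- 2 * z - 1).

Definition recursive_Zset (A : Z -> Prop) : Prop :=
  exists c : code, forall z : Z,
    (A z -> eval c [Z_to_nat z] 1%nat) /\ (~ A z -> eval c [Z_to_nat z] 0%nat).

Definition arith_prog (m p : Z) (x : Z) : Prop := exists k : Z, x = m + p * k.

Definition profinite_open (U : Z -> Prop) : Prop :=
  forall x, U x -> exists m p, 1 <= p /\ arith_prog m p x /\
                       (forall y, arith_prog m p y -> U y).

Definition profinite_closed (A : Z -> Prop) : Prop :=
  profinite_open (fun x => ~ A x).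

Definition mod_set (A : Z -> Prop) (n : nat) (r : nat) : Prop :=
  (r < n)%nat /\ exists x, A x /\ x mod (Z.of_nat n) = Z.of_nat r.

(** The map n |-> A mod n (n >= 1), whose values are finite subsets of
    {0,...,n-1}, is recursive iff membership r \in A mod n is decidable by a
    code taking (n, r). *)
Definition recursive_mod_map (A : Z -> Prop) : Prop :=
  exists c : code, forall n r : nat, (1 <= n)%nat ->
    (mod_set A n r -> eval c [n; r] 1%nat) /\
    (~ mod_set A n r -> eval c [n; r] 0%nat).

(* Main.v *)
Require Import Defs.
From Stdlib Require Import ZArith List Arith Lia Cantor Classical.
Import ListNotations.
Open Scope nat_scope.


Inductive exp : Type :=
| Var : nat -> exp
| Zero : exp
| Succ : exp -> exp
| Add : exp -> exp -> exp
| Fold : exp -> exp -> exp -> exp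
| Sum : exp -> exp -> exp
| Comp : exp -> list exp -> exp.

Fixpoint fold_up (n a : nat) (f : nat -> nat -> nat) : nat :=
  match n with 0 => a | S k => f k (fold_up k a f) end.
Fixpoint sumN (n : nat) (f : nat -> nat) : nat :=
  match n with 0 => 0 | S k => f k + sumN k f end.

Fixpoint den (e : exp) (env : list nat) : nat :=
  match e with
  | Var i => nth i env 0
  | Zero => 0
  | Succ a => S (den a env)
  | Add a b => den a env + den b env
  | Fold b i s => fold_up (den b env) (den i env) (fun k acc => den s (k :: acc :: env))
  | Sum b s => sumN (den b env) (fun k => den s (k :: env))
  | Comp f args => den f (map (fun a => den a env) args)
  end.

Definition projs (n : nat) := map CProj (seq 0 n).
Definition projs2 (n : nat) := map CProj (seq 2 n).
Definition ADDC := CRec (CProj 0) (CComp CSucc [CProj 1]).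

Fixpoint compile (n : nat) (e : exp) : code :=
  match e with
  | Var i => CProj i
  | Zero => CZero
  | Succ a => CComp CSucc [compile n a]
  | Add a b => CComp ADDC [compile n b; compile n a]
  | Fold b i s => CComp (CRec (compile n i) (compile (S (S n)) s)) (compile n b :: projs n)
  | Sum b s => CComp (CRec CZero (CComp ADDC
         [CComp (compile (S n) s) (CProj 0 :: projs2 n); CProj 1]))
         (compile n b :: projs n)
  | Comp f args => CComp (compile (length args) f) (map (compile n) args)
  end.

Lemma ADDC_ok : forall y x, eval ADDC [y; x] (y + x).
Proof.
  induction y; intros x.
  - constructor. apply (ev_proj 0 [x]).
  - simpl. eapply ev_recS. apply IHy.
    eapply ev_comp. constructor. apply (ev_proj 1). constructor.
    constructor.
Qed.

Lemma evalL_projs_gen : forall k env, k + length env >= 0 ->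
  forall m, m + k = length env ->
  evalL (map CProj (seq m k)) env (map (fun i => nth i env 0) (seq m k)).
Proof.
  induction k; intros env _ m Hm; simpl; constructor.
  - constructor.
  - apply IHk; lia.
Qed.

Lemma map_nth_seq : forall (env : list nat) m,
  map (fun i => nth i env 0) (seq m (length env - m)) = skipn m env.
Proof.
  induction env; intros m; simpl.
  - destruct m; reflexivity.
  - destruct m; simpl.
    + f_equal. rewrite <- seq_shift, map_map. simpl.
      specialize (IHenv 0). rewrite Nat.sub_0_r in IHenv. exact IHenv.
    + rewrite <- seq_shift, map_map. simpl. apply IHenv.
Qed.

Lemma evalL_projs : forall env, evalL (projs (length env)) env env.
Proof.
  intros env. unfold projs.
  pose proof (evalL_projs_gen (length env) env ltac:(lia) 0 ltac:(lia)).
  pose proof (map_nth_seq env 0). rewrite Nat.sub_0_r in H0. simpl in H0.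
  rewrite H0 in H. exact H.
Qed.

Lemma evalL_projs2 : forall k a b env, length env = k ->
  evalL (projs2 k) (a :: b :: env) env.
Proof.
  intros k a b env Hk. unfold projs2.
  pose proof (evalL_projs_gen k (a::b::env) ltac:(lia) 2 ltac:(simpl; lia)).
  pose proof (map_nth_seq (a::b::env) 2).
  replace (length (a :: b :: env) - 2) with (length env) in H0 by (simpl; lia).
  subst k. rewrite H0 in H. exact H.
Qed.

Section ExpInd.
Variable P : exp -> Prop.
Hypothesis HVar : forall i, P (Var i).
Hypothesis HZero : P Zero.
Hypothesis HSucc : forall a, P a -> P (Succ a).
Hypothesis HAdd : forall a b, P a -> P b -> P (Add a b).
Hypothesis HFold : forall a b c, P a -> P b -> P c -> P (Fold a b c).
Hypothesis HSum : forall a b, P a -> P b -> P (Sum a b).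
Hypothesis HComp : forall f args, P f -> Forall P args -> P (Comp f args).
Fixpoint exp_ind' (e : exp) : P e :=
  match e with
  | Var i => HVar i
  | Zero => HZero
  | Succ a => HSucc a (exp_ind' a)
  | Add a b => HAdd a b (exp_ind' a) (exp_ind' b)
  | Fold a b c => HFold a b c (exp_ind' a) (exp_ind' b) (exp_ind' c)
  | Sum a b => HSum a b (exp_ind' a) (exp_ind' b)
  | Comp f args => HComp f args (exp_ind' f)
      ((fix go (l : list exp) : Forall P l :=
         match l with [] => Forall_nil _ | x :: l' => Forall_cons _ (exp_ind' x) (go l') end) args)
  end.
End ExpInd.

Theorem compile_ok : forall e n env, length env = n -> eval (compile n e) env (den e env).
Proof.
  induction e using exp_ind'; intros n env Hn; subst n; simpl.
  - constructor.
  - constructor.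
  - econstructor. constructor. apply IHe; auto. constructor. constructor.
  - econstructor. constructor. apply IHe2; auto. constructor. apply IHe1; auto. constructor.
    rewrite Nat.add_comm. apply ADDC_ok.
  - econstructor. constructor. apply IHe1; auto. apply evalL_projs.
    generalize (den e1 env) as m. induction m; simpl.
    + constructor. apply IHe2; auto.
    + eapply ev_recS. apply IHm. apply IHe3. simpl; lia.
  - econstructor. constructor. apply IHe1; auto. apply evalL_projs.
    generalize (den e1 env) as m. induction m; simpl.
    + constructor. constructor.
    + eapply ev_recS. apply IHm.
      econstructor. constructor.
      * econstructor. constructor. constructor. apply evalL_projs2. reflexivity.
        apply IHe2. reflexivity.
      * constructor. apply (ev_proj 1). constructor.
      * apply ADDC_ok.
  - apply ev_comp with (ys := map (fun a => den a env) args).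
    + clear IHe. induction H; simpl; constructor; auto.
    + apply IHe. rewrite length_map; reflexivity.
Qed.


Definition tr e env := den e env <> 0.

Definition ISZ := Fold (Var 0) (Succ Zero) Zero.
Definition isz a := Comp ISZ [a].
Lemma den_isz a env : den (isz a) env = if den a env =? 0 then 1 else 0.
Proof. simpl. destruct (den a env); reflexivity. Qed.
Lemma tr_isz a env : tr (isz a) env <-> ~ tr a env.
Proof. unfold tr. rewrite den_isz. destruct (den a env); simpl; split; intros; try lia; congruence. Qed.
Definition nz a := isz (isz a).
Lemma tr_nz a env : tr (nz a) env <-> tr a env.
Proof. unfold nz. rewrite tr_isz, tr_isz. unfold tr. lia. Qed.

Definition MUL := Sum (Var 0) (Var 2).
Lemma sumN_const n c : sumN n (fun _ => c) = n * c.
Proof. induction n; simpl; lia. Qed.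
Definition mul a b := Comp MUL [a; b].
Lemma den_mul a b env : den (mul a b) env = den a env * den b env.
Proof. simpl. apply sumN_const. Qed.

Definition AND a b := mul a b.
Lemma tr_and a b env : tr (AND a b) env <-> tr a env /\ tr b env.
Proof. unfold tr, AND. rewrite den_mul. rewrite Nat.mul_eq_0. tauto. Qed.
Definition OR a b := Add a b.
Lemma tr_or a b env : tr (OR a b) env <-> tr a env \/ tr b env.
Proof. unfold tr, OR. simpl. lia. Qed.
Definition NOT a := isz a.
Lemma tr_not a env : tr (NOT a) env <-> ~ tr a env.
Proof. apply tr_isz. Qed.

Definition PRED := Fold (Var 0) Zero (Var 0).
Lemma den_PRED x : den PRED [x] = pred x.
Proof. destruct x; reflexivity. Qed.
Definition SUB := Fold (Var 1) (Var 0) (Comp PRED [Var 1]).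
Lemma den_SUB x y : den SUB [x; y] = x - y.
Proof. change (fold_up y x (fun _ acc => den PRED [acc]) = x - y).
  induction y; cbn [fold_up]. lia. rewrite IHy, den_PRED. lia. Qed.
Definition sub a b := Comp SUB [a; b].
Lemma den_sub a b env : den (sub a b) env = den a env - den b env.
Proof. unfold sub. cbn [den map]. apply den_SUB. Qed.
Definition pred_ a := Comp PRED [a].
Lemma den_pred a env : den (pred_ a) env = pred (den a env).
Proof. unfold pred_. cbn [den map]. apply den_PRED. Qed.

Definition EQ a b := AND (isz (sub a b)) (isz (sub b a)).
Lemma tr_eq a b env : tr (EQ a b) env <-> den a env = den b env.
Proof. unfold EQ. rewrite tr_and, !tr_isz. unfold tr. rewrite !den_sub. lia. Qed.
Definition LT a b := nz (sub b a).
Lemma tr_lt a b env : tr (LT a b) env <-> den a env < den b env.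
Proof. unfold LT. rewrite tr_nz. unfold tr. rewrite den_sub. lia. Qed.

Lemma sumN_pos n f : sumN n f <> 0 <-> exists i, i < n /\ f i <> 0.
Proof. induction n; simpl. split. lia. intros [i [H _]]; lia.
  split. intro H. destruct (f n) eqn:E. destruct (proj1 IHn) as [i [? ?]]. lia. exists i; split; auto.
  exists n; split; auto; lia.
  intros [i [H1 H2]]. destruct (Nat.eq_dec i n). subst; lia.
  assert (sumN n f <> 0). apply IHn. exists i; split; auto; lia. lia. Qed.

Definition bex b s := Sum b s.
Lemma tr_bex b s env : tr (bex b s) env <-> exists i, i < den b env /\ tr s (i :: env).
Proof. unfold tr, bex. simpl. apply sumN_pos. Qed.
Definition ball b s := isz (Sum b (isz s)).
Lemma tr_ball b s env : tr (ball b s) env <-> forall i, i < den b env -> tr s (i :: env).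
Proof. unfold ball. rewrite tr_isz. change (tr (Sum b (isz s)) env) with (tr (bex b (isz s)) env).
  rewrite tr_bex. split.
  - intros H i Hi. destruct (Nat.eq_dec (den s (i::env)) 0) as [E|E]; auto.
    exfalso. apply H. exists i. split; auto. rewrite tr_isz. unfold tr; auto.
  - intros H [i [Hi H2]]. rewrite tr_isz in H2. auto. Qed.

Definition vars_from (m n : nat) := map Var (seq m n).
Lemma map_den_vars : forall n m env, map (fun a => den a env) (vars_from m n) = map (fun i => nth i env 0) (seq m n).
Proof. intros. unfold vars_from. rewrite map_map. reflexivity. Qed.

Lemma map_nth_seq2 : forall (env : list nat) m,
  map (fun i => nth i env 0) (seq m (length env - m)) = skipn m env.
Proof.
  induction env; intros m; simpl.
  - destruct m; reflexivity.
  - destruct m; simpl.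
    + f_equal. rewrite <- seq_shift, map_map. simpl.
      specialize (IHenv 0). rewrite Nat.sub_0_r in IHenv. exact IHenv.
    + rewrite <- seq_shift, map_map. simpl. apply IHenv.
Qed.

Definition sh (n : nat) (s : exp) := Comp s (Var 0 :: vars_from 2 n).
Lemma den_sh n s i j env : length env = n -> den (sh n s) (i :: j :: env) = den s (i :: env).
Proof. intros H. unfold sh. simpl. f_equal. f_equal. rewrite map_den_vars.
  pose proof (map_nth_seq2 (i::j::env) 2). simpl length in H0. replace (S (S (length env)) - 2) with n in H0 by lia.
  rewrite H0. reflexivity. Qed.

Lemma sumN_ind m i0 : sumN m (fun j => if j <? i0 then 1 else 0) = Nat.min m i0.
Proof. induction m; cbn [sumN]. lia. rewrite IHm. destruct (m <? i0) eqn:E.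
  apply Nat.ltb_lt in E. lia. apply Nat.ltb_ge in E. lia. Qed.

Definition least (n : nat) b s := Sum b (isz (bex (Succ (Var 0)) (sh n s))).
Lemma least_ok n b s env i0 : length env = n -> i0 < den b env -> tr s (i0 :: env) ->
  (forall i, i < i0 -> ~ tr s (i :: env)) -> den (least n b s) env = i0.
Proof.
  intros Hn Hb Hs Hmin. unfold least. simpl.
  assert (forall j, den (isz (bex (Succ (Var 0)) (sh n s))) (j :: env) = if j <? i0 then 1 else 0).
  { intros j. rewrite den_isz. destruct (j <? i0) eqn:E.
    - apply Nat.ltb_lt in E. destruct (Nat.eqb_spec (den (bex (Succ (Var 0)) (sh n s)) (j :: env)) 0); auto.
      exfalso. apply (tr_bex _ _ _) in n0. destruct n0 as [i [Hi Hi2]]. simpl in Hi.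
      unfold tr in Hi2. rewrite den_sh in Hi2 by auto. apply (Hmin i); [lia|exact Hi2].
    - apply Nat.ltb_ge in E. destruct (Nat.eqb_spec (den (bex (Succ (Var 0)) (sh n s)) (j :: env)) 0); auto.
      exfalso. refine (_ e). apply (tr_bex _ _ _). exists i0. simpl. split. lia.
      unfold tr. rewrite den_sh by auto. exact Hs. }
  generalize (den b env) Hb. clear Hb. intros m Hm.
  transitivity (sumN m (fun j => if j <? i0 then 1 else 0)).
  { clear Hm. induction m; cbn [sumN]; auto. rewrite <- IHm. rewrite <- H. reflexivity. }
  clear H. rewrite sumN_ind. lia.
Qed.

Definition pr x y := Cantor.to_nat (x, y).
Definition PAIR := Add (Var 1) (Sum (Add (Var 1) (Var 0)) (Succ (Var 0))).
Lemma den_PAIR x y : den PAIR [x; y] = pr x y.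
Proof. unfold pr, to_nat. simpl. f_equal. generalize (y + x). induction n; simpl; auto. Qed.
Definition pair_ a b := Comp PAIR [a; b].
Lemma den_pair a b env : den (pair_ a b) env = pr (den a env) (den b env).
Proof. unfold pair_. cbn [den map]. apply den_PAIR. Qed.
Lemma pr_inj x y x' y' : pr x y = pr x' y' -> x = x' /\ y = y'.
Proof. intros H. unfold pr in H. apply to_nat_inj in H. inversion H; auto. Qed.
Lemma pr_ge x y : x <= pr x y /\ y <= pr x y.
Proof. pose proof (to_nat_non_decreasing x y). unfold pr. lia. Qed.

Definition fstN p := fst (of_nat p).
Definition sndN p := snd (of_nat p).
Lemma fstN_pr x y : fstN (pr x y) = x.
Proof. unfold fstN, pr. rewrite cancel_of_to. reflexivity. Qed.
Lemma sndN_pr x y : sndN (pr x y) = y.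
Proof. unfold sndN, pr. rewrite cancel_of_to. reflexivity. Qed.
Lemma pr_surj p : p = pr (fstN p) (sndN p).
Proof. unfold fstN, sndN, pr. rewrite <- surjective_pairing. rewrite cancel_to_of. auto. Qed.

Definition FST := least 1 (Succ (Var 0)) (bex (Succ (Var 1)) (EQ (pair_ (Var 1) (Var 0)) (Var 2))).
Definition SND := least 1 (Succ (Var 0)) (bex (Succ (Var 1)) (EQ (pair_ (Var 0) (Var 1)) (Var 2))).
Lemma den_FST p : den FST [p] = fstN p.
Proof. rewrite (pr_surj p). generalize (fstN p) (sndN p). intros x y.
  rewrite fstN_pr. pose proof (pr_ge x y).
  apply least_ok; auto. simpl; lia.
  - apply tr_bex. exists y. split. change (y < S (pr x y)). lia.
    apply tr_eq. rewrite den_pair. reflexivity.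
  - intros i Hi Ht. apply tr_bex in Ht. destruct Ht as [y' [_ Ht]]. apply tr_eq in Ht.
    rewrite den_pair in Ht. cbn [den nth] in Ht. apply pr_inj in Ht. lia. Qed.
Lemma den_SND p : den SND [p] = sndN p.
Proof. rewrite (pr_surj p). generalize (fstN p) (sndN p). intros x y.
  rewrite sndN_pr. pose proof (pr_ge x y).
  apply least_ok; auto. simpl; lia.
  - apply tr_bex. exists x. split. change (x < S (pr x y)). lia. apply tr_eq. rewrite den_pair. reflexivity.
  - intros i Hi Ht. apply tr_bex in Ht. destruct Ht as [x' [_ Ht]]. apply tr_eq in Ht.
    rewrite den_pair in Ht. cbn [den nth] in Ht. apply pr_inj in Ht. lia. Qed.
Definition fst_ a := Comp FST [a].
Definition snd_ a := Comp SND [a].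
Lemma den_fst a env : den (fst_ a) env = fstN (den a env).
Proof. unfold fst_. cbn [den map]. apply den_FST. Qed.
Lemma den_snd a env : den (snd_ a) env = sndN (den a env).
Proof. unfold snd_. cbn [den map]. apply den_SND. Qed.

Fixpoint encL (l : list nat) : nat :=
  match l with [] => 0 | x :: l' => S (pr x (encL l')) end.
Definition hdN X := fstN (pred X).
Definition tlN X := sndN (pred X).
Definition HD := fst_ (pred_ (Var 0)).
Definition TL := snd_ (pred_ (Var 0)).
Definition hd_ a := Comp HD [a].
Definition tl_ a := Comp TL [a].
Lemma den_hd a env : den (hd_ a) env = hdN (den a env).
Proof. unfold hd_, HD. cbn [den map]. rewrite den_fst, den_pred. reflexivity. Qed.
Lemma den_tl a env : den (tl_ a) env = tlN (den a env).
Proof. unfold tl_, TL. cbn [den map]. rewrite den_snd, den_pred. reflexivity. Qed.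
Lemma hdN_cons x l : hdN (encL (x :: l)) = x.
Proof. unfold hdN. simpl. apply fstN_pr. Qed.
Lemma tlN_cons x l : tlN (encL (x :: l)) = encL l.
Proof. unfold tlN. simpl. apply sndN_pr. Qed.
Lemma tlN_enc l : tlN (encL l) = encL (tl l).
Proof. destruct l. reflexivity. apply tlN_cons. Qed.
Lemma hdN_enc l : hdN (encL l) = hd 0 l.
Proof. destruct l. reflexivity. apply hdN_cons. Qed.
Lemma skipn_S_tl {A} j (l : list A) : skipn (S j) l = tl (skipn j l).
Proof. revert l; induction j; intros [|a l]; simpl; auto. apply IHj. Qed.

Fixpoint tlsN j X := match j with 0 => X | S k => tlN (tlsN k X) end.
Definition TLN := Fold (Var 0) (Var 1) (tl_ (Var 1)).
Lemma den_TLN j X : den TLN [j; X] = tlsN j X.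
Proof. induction j. reflexivity.
  change (den (tl_ (Var 1)) [j; den TLN [j; X]; S j; X] = tlsN (S j) X).
  rewrite den_tl. simpl nth. rewrite IHj. reflexivity. Qed.
Lemma tlsN_enc j l : tlsN j (encL l) = encL (skipn j l).
Proof. induction j; cbn [tlsN]; auto. rewrite IHj, tlN_enc, skipn_S_tl. reflexivity. Qed.
Definition nthN j X := hdN (tlsN j X).
Definition NTH := hd_ (Comp TLN [Var 0; Var 1]).
Definition nth_ a b := Comp NTH [a; b].
Lemma den_nth a b env : den (nth_ a b) env = nthN (den a env) (den b env).
Proof. unfold nth_, NTH. cbn [den map]. rewrite den_hd. cbn [den map]. rewrite den_TLN. reflexivity. Qed.
Lemma nthN_enc j l : nthN j (encL l) = nth j l 0.
Proof. unfold nthN. rewrite tlsN_enc, hdN_enc. revert l; induction j; intros [|a l]; simpl; auto. Qed.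

Lemma encL_ge l : length l <= encL l.
Proof. induction l; simpl; auto. pose proof (pr_ge a (encL l)). lia. Qed.
Lemma encL_0 l : encL l = 0 <-> l = [].
Proof. destruct l; simpl; split; congruence. Qed.

Definition LEN := least 1 (Succ (Var 0)) (EQ (Comp TLN [Var 0; Var 1]) Zero).
Definition len_ a := Comp LEN [a].
Lemma den_len l env a : den a env = encL l -> den (len_ a) env = length l.
Proof. intros H. unfold len_. cbn [den map]. rewrite H. apply least_ok; auto.
  - change (length l < S (encL l)). pose proof (encL_ge l). lia.
  - apply tr_eq. cbn [den map nth]. rewrite den_TLN, tlsN_enc. cbn [den]. apply encL_0. apply skipn_all.
  - intros i Hi Ht. apply tr_eq in Ht. cbn [den map nth] in Ht. rewrite den_TLN, tlsN_enc in Ht.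
    cbn [den] in Ht. apply encL_0 in Ht. assert (length (skipn i l) = 0) by (rewrite Ht; auto).
    rewrite length_skipn in H0. lia. Qed.

Lemma encL_surj w : exists l, w = encL l.
Proof. induction w as [w IH] using (well_founded_induction lt_wf).
  destruct w. exists []; auto.
  destruct (IH (sndN w)) as [l Hl]. rewrite (pr_surj w) at 2. pose proof (pr_ge (fstN w) (sndN w)). lia.
  exists (fstN w :: l). simpl. rewrite <- Hl. rewrite <- pr_surj. reflexivity. Qed.

Definition MEM := bex (len_ (Var 0)) (EQ (nth_ (Var 0) (Var 1)) (Var 2)).
Definition mem_ a b := Comp MEM [a; b].
Lemma tr_mem l t env a b : den a env = encL l -> den b env = t ->
  (tr (mem_ a b) env <-> In t l).
Proof. intros Ha Hb. subst t. unfold mem_, tr. cbn [den map]. rewrite Ha. generalize (den b env) as t.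
  intros t. change (tr MEM [encL l; t] <-> In t l).
  unfold MEM. rewrite tr_bex. rewrite (den_len l) by reflexivity. split.
  - intros [i [Hi Ht]]. apply tr_eq in Ht. rewrite den_nth in Ht. cbn [den nth] in Ht. rewrite nthN_enc in Ht.
    subst t. apply nth_In; auto.
  - intros Hin. apply (In_nth _ _ 0) in Hin. destruct Hin as [i [Hi Hn]]. exists i. split; auto.
    apply tr_eq. rewrite den_nth. cbn [den nth]. rewrite nthN_enc. auto. Qed.

Definition cons_ a b := Succ (pair_ a b).
Lemma den_cons a b env : den (cons_ a b) env = S (pr (den a env) (den b env)).
Proof. simpl. f_equal. apply den_pair. Qed.

Fixpoint decL_f (n w : nat) : list nat :=
  match n with 0 => [] | S n' => match w with 0 => [] | S p => fstN p :: decL_f n' (sndN p) end end.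
Definition decL w := decL_f (S w) w.
Lemma decL_f_ok n w : w < n -> encL (decL_f n w) = w.
Proof. revert w; induction n; intros w H. lia. destruct w. reflexivity. simpl.
  rewrite IHn. f_equal. symmetry. apply pr_surj. pose proof (pr_surj w). pose proof (pr_ge (fstN w) (sndN w)). lia. Qed.
Lemma encL_decL w : encL (decL w) = w.
Proof. apply decL_f_ok. lia. Qed.
Lemma encL_inj l1 l2 : encL l1 = encL l2 -> l1 = l2.
Proof. revert l2; induction l1; intros [|b l2] H; simpl in H; try congruence.
  injection H as H. apply pr_inj in H. destruct H. f_equal; auto. Qed.
Lemma decL_encL l : decL (encL l) = l.
Proof. apply encL_inj. apply encL_decL. Qed.
Lemma den_len' a env : den (len_ a) env = length (decL (den a env)).
Proof. apply den_len. symmetry; apply encL_decL. Qed.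
Lemma tr_mem' a b env : tr (mem_ a b) env <-> In (den b env) (decL (den a env)).
Proof. apply tr_mem. symmetry; apply encL_decL. reflexivity. Qed.
Lemma den_nth' a b env : den (nth_ a b) env = nth (den a env) (decL (den b env)) 0.
Proof. rewrite den_nth. rewrite <- (encL_decL (den b env)) at 1. apply nthN_enc. Qed.


Fixpoint enc (c : code) : nat :=
  match c with
  | CZero => pr 0 0
  | CSucc => pr 1 0
  | CProj i => pr 2 i
  | CComp f gs => pr 3 (pr (enc f) (encL (map enc gs)))
  | CRec f g => pr 4 (pr (enc f) (enc g))
  | CMu f => pr 5 (enc f)
  end.
Definition trip e X y := pr e (pr X y).
Definition trip_ a b c := pair_ a (pair_ b c).
Lemma den_trip a b c env : den (trip_ a b c) env = trip (den a env) (den b env) (den c env).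
Proof. unfold trip_. rewrite !den_pair. reflexivity. Qed.

Fixpoint K n := match n with 0 => Zero | S k => Succ (K k) end.
Lemma den_K n env : den (K n) env = n.
Proof. induction n; simpl; auto. Qed.

Definition COMP2 := AND (EQ (fst_ (Var 5)) (Var 1)) (AND (EQ (snd_ (snd_ (Var 5))) (Var 4))
  (AND (EQ (len_ (fst_ (snd_ (Var 5)))) (len_ (Var 2)))
   (ball (len_ (Var 2)) (mem_ (Var 1) (trip_ (nth_ (Var 0) (Var 3)) (Var 4) (nth_ (Var 0) (fst_ (snd_ (Var 6))))))))).
Definition COMPC := bex (len_ (Var 0)) (Comp COMP2 [Var 1; Var 2; Var 3; Var 4; Var 5; nth_ (Var 0) (Var 1)]).
Definition REC2 := AND (EQ (fst_ (Var 6)) (Var 1)) (AND (EQ (fst_ (snd_ (Var 6))) (cons_ (pred_ (Var 3)) (Var 4)))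
  (mem_ (Var 0) (trip_ (Var 2) (cons_ (pred_ (Var 3)) (cons_ (snd_ (snd_ (Var 6))) (Var 4))) (Var 5)))).
Definition RECC := OR (AND (isz (Var 4)) (mem_ (Var 0) (trip_ (Var 2) (Var 5) (Var 6))))
  (AND (nz (Var 4)) (bex (len_ (Var 0)) (Comp REC2 [Var 1; Var 2; Var 4; Var 5; Var 6; Var 7; nth_ (Var 0) (Var 1)]))).
Definition MU2 := AND (EQ (fst_ (Var 0)) (Var 1)) (AND (EQ (fst_ (snd_ (Var 0))) (Var 2)) (nz (snd_ (snd_ (Var 0))))).
Definition MUC := AND (mem_ (Var 0) (trip_ (Var 1) (cons_ (Var 3) (Var 2)) (K 0)))
  (ball (Var 3) (bex (len_ (Var 1)) (Comp MU2 [nth_ (Var 0) (Var 2); Var 3; cons_ (Var 1) (Var 4)]))).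
Definition JUST2 :=
  OR (AND (EQ (Var 4) (K 0)) (EQ (Var 3) (K 0)))
 (OR (AND (EQ (Var 4) (K 1)) (AND (nz (Var 2)) (EQ (Var 3) (Succ (hd_ (Var 2))))))
 (OR (AND (EQ (Var 4) (K 2)) (EQ (Var 3) (nth_ (Var 5) (Var 2))))
 (OR (AND (EQ (Var 4) (K 3)) (Comp COMPC [Var 0; fst_ (Var 5); snd_ (Var 5); Var 2; Var 3]))
 (OR (AND (EQ (Var 4) (K 4)) (AND (nz (Var 2)) (Comp RECC [Var 0; Var 1; fst_ (Var 5); snd_ (Var 5); hd_ (Var 2); tl_ (Var 2); Var 3])))
     (AND (EQ (Var 4) (K 5)) (Comp MUC [Var 0; Var 5; Var 2; Var 3])))))).
Definition JUST := Comp JUST2 [Var 0; fst_ (Var 1); fst_ (snd_ (Var 1)); snd_ (snd_ (Var 1)); fst_ (fst_ (Var 1)); snd_ (fst_ (Var 1))].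

Definition specP (l : list nat) (c : code) (xs : list nat) (y : nat) : Prop :=
 match c with
 | CZero => y = 0
 | CSucc => exists x xs', xs = x :: xs' /\ y = S x
 | CProj i => y = nth i xs 0
 | CComp f gs => exists ys, In (trip (enc f) (encL ys) y) l /\ length ys = length gs /\
     forall k, k < length gs -> In (trip (enc (nth k gs CZero)) (encL xs) (nth k ys 0)) l
 | CRec f g => exists n xs', xs = n :: xs' /\ ((n = 0 /\ In (trip (enc f) (encL xs') y) l) \/
     (exists m r, n = S m /\ In (trip (enc (CRec f g)) (encL (m :: xs')) r) l /\
        In (trip (enc g) (encL (m :: r :: xs')) y) l))
 | CMu f => In (trip (enc f) (encL (y :: xs)) 0) l /\
     forall z, z < y -> exists v, In (trip (enc f) (encL (z :: xs)) (S v)) l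
 end.


Lemma tr_comp f args env : tr (Comp f args) env <-> tr f (map (fun a => den a env) args).
Proof. reflexivity. Qed.
Ltac ds := repeat (first [progress cbn [den map nth] | rewrite den_fst | rewrite den_snd | rewrite den_pair
  | rewrite den_trip | rewrite den_K | rewrite den_hd | rewrite den_tl | rewrite den_nth' | rewrite den_len' | rewrite den_pred
  | rewrite den_cons | rewrite fstN_pr | rewrite sndN_pr | rewrite decL_encL]).
Ltac ts := repeat (first [rewrite tr_or | rewrite tr_and | rewrite tr_eq | rewrite tr_nz | rewrite tr_isz
  | rewrite tr_comp | rewrite tr_mem' ]); ds.

Lemma tr_var i env : tr (Var i) env <-> nth i env 0 <> 0.
Proof. reflexivity. Qed.
Lemma eqF (n m : nat) (P : Prop) : n <> m -> (n = m /\ P <-> False).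
Proof. intuition. Qed.
Lemma eqT (n : nat) (P : Prop) : (n = n /\ P <-> P).
Proof. intuition. Qed.
Lemma or_Fl P : (False \/ P) <-> P. Proof. intuition. Qed.
Lemma or_Fr P : (P \/ False) <-> P. Proof. intuition. Qed.
Ltac clean := repeat (first [rewrite (eqF 0 1) by discriminate | rewrite (eqF 0 2) by discriminate
 | rewrite (eqF 0 3) by discriminate | rewrite (eqF 0 4) by discriminate | rewrite (eqF 0 5) by discriminate
 | rewrite (eqF 1 0) by discriminate | rewrite (eqF 1 2) by discriminate
 | rewrite (eqF 1 3) by discriminate | rewrite (eqF 1 4) by discriminate | rewrite (eqF 1 5) by discriminate
 | rewrite (eqF 2 0) by discriminate | rewrite (eqF 2 1) by discriminate
 | rewrite (eqF 2 3) by discriminate | rewrite (eqF 2 4) by discriminate | rewrite (eqF 2 5) by discriminate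
 | rewrite (eqF 3 0) by discriminate | rewrite (eqF 3 1) by discriminate
 | rewrite (eqF 3 2) by discriminate | rewrite (eqF 3 4) by discriminate | rewrite (eqF 3 5) by discriminate
 | rewrite (eqF 4 0) by discriminate | rewrite (eqF 4 1) by discriminate
 | rewrite (eqF 4 2) by discriminate | rewrite (eqF 4 3) by discriminate | rewrite (eqF 4 5) by discriminate
 | rewrite (eqF 5 0) by discriminate | rewrite (eqF 5 1) by discriminate
 | rewrite (eqF 5 2) by discriminate | rewrite (eqF 5 3) by discriminate | rewrite (eqF 5 4) by discriminate
 | rewrite eqT | rewrite or_Fl | rewrite or_Fr]).


Lemma nth_map_enc k (gs : list code) : k < length gs -> nth k (map enc gs) 0 = enc (nth k gs CZero).
Proof. intros H. rewrite (nth_indep _ 0 (enc CZero)) by (rewrite length_map; auto). apply map_nth. Qed.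

Lemma comp2_ok L F G X y u : tr COMP2 [L; F; G; X; y; u] <->
  fstN u = F /\ sndN (sndN u) = y /\ length (decL (fstN (sndN u))) = length (decL G) /\
  forall k, k < length (decL G) -> In (trip (nth k (decL G) 0) X (nth k (decL (fstN (sndN u))) 0)) (decL L).
Proof.
  unfold COMP2. ts. rewrite tr_ball. ds. split; intros [H1 [H2 [H3 H4]]]; repeat split; auto;
  intros k Hk; specialize (H4 k Hk); revert H4; ts; auto.
Qed.

Lemma bex_list i L (P : nat -> Prop) (body : exp) env :
  nth i env 0 = L ->
  (forall j, tr body (j :: env) <-> P (nth j (decL L) 0)) ->
  (tr (bex (len_ (Var i)) body) env <-> exists u, In u (decL L) /\ P u).
Proof.
  intros HL H. rewrite tr_bex. ds. rewrite HL. split.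
  - intros [j [Hj Hb]]. apply H in Hb. exists (nth j (decL L) 0). split; auto. apply nth_In; auto.
  - intros [u [Hu Pu]]. apply (In_nth _ _ 0) in Hu. destruct Hu as [j [Hj Hn]]. exists j. split; auto.
    apply H. rewrite Hn; auto.
Qed.

Lemma compc_ok L F G X y : tr COMPC [L; F; G; X; y] <->
  exists u, In u (decL L) /\ (fstN u = F /\ sndN (sndN u) = y /\ length (decL (fstN (sndN u))) = length (decL G) /\
  forall k, k < length (decL G) -> In (trip (nth k (decL G) 0) X (nth k (decL (fstN (sndN u))) 0)) (decL L)).
Proof.
  unfold COMPC. apply bex_list with (i := 0). reflexivity. intros j. rewrite tr_comp. ds. apply comp2_ok.
Qed.

Lemma rec2_ok L E G n X' y u : tr REC2 [L; E; G; n; X'; y; u] <->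
  fstN u = E /\ fstN (sndN u) = S (pr (pred n) X') /\
  In (trip G (S (pr (pred n) (S (pr (sndN (sndN u)) X')))) y) (decL L).
Proof. unfold REC2. ts. reflexivity. Qed.

Lemma recc_ok L E F G n X' y : tr RECC [L; E; F; G; n; X'; y] <->
  (n = 0 /\ In (trip F X' y) (decL L)) \/
  (n <> 0 /\ exists u, In u (decL L) /\ (fstN u = E /\ fstN (sndN u) = S (pr (pred n) X') /\
     In (trip G (S (pr (pred n) (S (pr (sndN (sndN u)) X')))) y) (decL L))).
Proof.
  unfold RECC. ts. rewrite (bex_list 0 L (fun u => fstN u = E /\ fstN (sndN u) = S (pr (pred n) X') /\
     In (trip G (S (pr (pred n) (S (pr (sndN (sndN u)) X')))) y) (decL L))).
  - rewrite !tr_var; cbn [nth]. split; (intros [[H1 H2]|[H1 H2]]; [left|right]; split; auto; lia).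
  - reflexivity.
  - intros j. rewrite tr_comp. ds. apply rec2_ok.
Qed.

Lemma mu2_ok u F Z : tr MU2 [u; F; Z] <-> fstN u = F /\ fstN (sndN u) = Z /\ sndN (sndN u) <> 0.
Proof. unfold MU2. ts. unfold tr. cbn [den nth]. rewrite den_snd, den_snd. reflexivity. Qed.

Lemma muc_ok L F X y : tr MUC [L; F; X; y] <->
  In (trip F (S (pr y X)) 0) (decL L) /\
  forall z, z < y -> exists u, In u (decL L) /\ (fstN u = F /\ fstN (sndN u) = S (pr z X) /\ sndN (sndN u) <> 0).
Proof.
  unfold MUC. ts. rewrite tr_ball. ds. apply and_iff_compat_l. split; intros H z Hz; specialize (H z Hz).
  - revert H. rewrite (bex_list 1 L (fun u => fstN u = F /\ fstN (sndN u) = S (pr z X) /\ sndN (sndN u) <> 0)); auto.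
    intros j. rewrite tr_comp. ds. apply mu2_ok.
  - rewrite (bex_list 1 L (fun u => fstN u = F /\ fstN (sndN u) = S (pr z X) /\ sndN (sndN u) <> 0)); auto.
    intros j. rewrite tr_comp. ds. apply mu2_ok.
Qed.

Lemma just_spec l c xs y :
  tr JUST [encL l; trip (enc c) (encL xs) y] <-> specP l c xs y.
Proof.
  unfold JUST. rewrite tr_comp. unfold trip. ds.
  unfold JUST2. ts.
  destruct c; cbn [enc]; ds; clean.
  - reflexivity.
  - rewrite tr_var. cbn [nth specP]. destruct xs as [|x xs']; [|rewrite hdN_cons]; cbn [encL].
    + split. intros [H _]; congruence. intros [x [xs' [H _]]]; congruence.
    + split. intros [_ H]. eauto. intros [x0 [xs0 [H1 H2]]]. inversion H1; subst.
      split; auto; lia.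
  - reflexivity.
  - rewrite compc_ok. rewrite !decL_encL. cbn [specP]. rewrite length_map. split.
    + intros [u [Hu [H1 [H2 [H3 H4]]]]]. exists (decL (fstN (sndN u))). split; [|split]; auto.
      * unfold trip. rewrite encL_decL, <- H1, <- H2, <- pr_surj, <- pr_surj. auto.
      * intros k Hk. specialize (H4 k Hk). rewrite nth_map_enc in H4; auto.
    + intros [ys [H1 [H2 H3]]]. exists (trip (enc c) (encL ys) y). split; auto.
      unfold trip in *. rewrite !fstN_pr, !sndN_pr, !fstN_pr, ?decL_encL. repeat split; auto.
      intros k Hk. rewrite nth_map_enc; auto.
  - rewrite tr_var. cbn [nth specP]. rewrite recc_ok. destruct xs as [|n xs'].
    + cbn [encL]. split. intros [H _]; congruence. intros [n [xs' [H _]]]; congruence.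
    + rewrite hdN_cons, tlN_cons. unfold trip. cbn [enc encL]. split.
      * intros [_ [[Hn Hin]|[Hn [u [Hu [H1 [H2 H3]]]]]]]; rewrite ?decL_encL in *; exists n, xs'; split; auto.
        right. exists (pred n), (sndN (sndN u)). split. lia. split; auto.
        rewrite (pr_surj u), (pr_surj (sndN u)) in Hu. rewrite H1, H2 in Hu. exact Hu.
      * intros [n0 [xs0 [Heq H]]]. injection Heq as <- <-. split. lia. rewrite !decL_encL.
        destruct H as [[Hn Hin]|[m [r [Hn [H1 H2]]]]]. left; auto. right. split. lia.
        eexists. split. exact H1. rewrite ?fstN_pr, ?sndN_pr, ?fstN_pr, ?sndN_pr. subst n. simpl pred.
        repeat split; auto.
  - rewrite muc_ok. cbn [specP]. rewrite !decL_encL. unfold trip. cbn [encL]. apply and_iff_compat_l.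
    split; intros H z Hz; specialize (H z Hz).
    + destruct H as [u [Hu [H1 [H2 H3]]]]. exists (pred (sndN (sndN u))).
      rewrite (pr_surj u), (pr_surj (sndN u)) in Hu. rewrite H1, H2 in Hu.
      replace (S (pred (sndN (sndN u)))) with (sndN (sndN u)) by lia. exact Hu.
    + destruct H as [v Hv]. eexists. split. exact Hv. rewrite ?fstN_pr, ?sndN_pr, ?fstN_pr, ?sndN_pr.
      repeat split; auto; lia.
Qed.


Section CodeInd.
Variable P : code -> Prop.
Hypothesis H0 : P CZero.
Hypothesis H1 : P CSucc.
Hypothesis H2 : forall i, P (CProj i).
Hypothesis H3 : forall f gs, P f -> Forall P gs -> P (CComp f gs).
Hypothesis H4 : forall f g, P f -> P g -> P (CRec f g).
Hypothesis H5 : forall f, P f -> P (CMu f).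
Fixpoint code_ind' (c : code) : P c :=
  match c with
  | CZero => H0 | CSucc => H1 | CProj i => H2 i
  | CComp f gs => H3 f gs (code_ind' f)
      ((fix go (l : list code) : Forall P l :=
         match l with [] => Forall_nil _ | x :: l' => Forall_cons _ (code_ind' x) (go l') end) gs)
  | CRec f g => H4 f g (code_ind' f) (code_ind' g)
  | CMu f => H5 f (code_ind' f)
  end.
End CodeInd.

Lemma evalL_nth gs xs ys : length ys = length gs ->
  (forall k, k < length gs -> eval (nth k gs CZero) xs (nth k ys 0)) -> evalL gs xs ys.
Proof. revert ys; induction gs; intros [|y ys] Hl H; simpl in *; try discriminate; constructor.
  apply (H 0). lia. apply IHgs. lia. intros k Hk. apply (H (S k)). lia. Qed.

Theorem sound l : (forall t, In t l -> tr JUST [encL l; t]) ->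
  forall c xs y, In (trip (enc c) (encL xs) y) l -> eval c xs y.
Proof.
  intros Hv c. induction c using code_ind'; intros xs y Hin; apply Hv in Hin; apply just_spec in Hin;
    cbn [specP] in Hin.
  - subst. constructor.
  - destruct Hin as [x [xs' [-> ->]]]. constructor.
  - subst. constructor.
  - destruct Hin as [ys [Hf [Hl Hk]]]. econstructor. 2: apply IHc; exact Hf.
    apply evalL_nth; auto. intros k Hk'. rewrite Forall_forall in H.
    apply H. apply nth_In; auto. apply Hk; auto.
  - destruct Hin as [n [xs' [-> Hin]]]. revert y Hin. induction n; intros y Hin.
    + destruct Hin as [[_ H]|[m [r [Hm _]]]]; [|lia]. constructor. apply IHc1; auto.
    + destruct Hin as [[Hn _]|[m [r [Hm [Ha Hb]]]]]; [lia|]. injection Hm as <-.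
      econstructor. 2: apply IHc2; exact Hb.
      apply Hv in Ha. apply just_spec in Ha. cbn [specP] in Ha.
      destruct Ha as [n0 [xs0 [Heq Ha]]]. injection Heq as <- <-. apply IHn. exact Ha.
  - destruct Hin as [Ha Hb]. constructor. apply IHc; auto.
    intros z Hz. destruct (Hb z Hz) as [v Hv']. exists v. apply IHc; auto.
Qed.

Definition good (l : list nat) := forall t, In t l -> exists c xs y, t = trip (enc c) (encL xs) y /\ specP l c xs y.

Lemma specP_mono l l' c xs y : incl l l' -> specP l c xs y -> specP l' c xs y.
Proof. intros Hi. destruct c; cbn [specP]; auto.
  - intros [ys [A [B C]]]. exists ys. split; auto.
  - intros [n [xs' [E H]]]. exists n, xs'. split; auto. destruct H as [[? ?]|[m [r [? [? ?]]]]]; [left|right]; auto.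
    exists m, r; auto.
  - intros [A B]. split; auto. intros z Hz. destruct (B z Hz) as [v ?]. exists v; auto.
Qed.

Lemma good_app l1 l2 : good l1 -> good l2 -> good (l1 ++ l2).
Proof. intros G1 G2 t Ht. apply in_app_or in Ht. destruct Ht as [Ht|Ht];
  [destruct (G1 t Ht) as [c [xs [y [E S]]]]|destruct (G2 t Ht) as [c [xs [y [E S]]]]];
  exists c, xs, y; split; auto; eapply specP_mono; eauto; intros u Hu; apply in_or_app; auto. Qed.

Lemma good_cons l c xs y : good l -> specP (trip (enc c) (encL xs) y :: l) c xs y ->
  good (trip (enc c) (encL xs) y :: l).
Proof. intros G S t [<-|Ht]. exists c, xs, y; auto.
  destruct (G t Ht) as [c' [xs' [y' [E S']]]]. exists c', xs', y'. split; auto.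
  eapply specP_mono; eauto. intros u Hu; right; auto. Qed.

Definition cert c xs y := exists l, good l /\ In (trip (enc c) (encL xs) y) l.

Lemma C_base c xs y : specP [] c xs y -> cert c xs y.
Proof. intros H. exists [trip (enc c) (encL xs) y]. split. apply good_cons. intros t [].
  eapply specP_mono; eauto. intros u []. left; auto. Qed.

Definition certL gs xs ys := exists l, good l /\ length ys = length gs /\
  forall k, k < length gs -> In (trip (enc (nth k gs CZero)) (encL xs) (nth k ys 0)) l.

Lemma C_nil xs : certL [] xs [].
Proof. exists []. split. intros t []. split; auto. intros k Hk; simpl in Hk; lia. Qed.
Lemma C_cons g gs xs y ys : cert g xs y -> certL gs xs ys -> certL (g :: gs) xs (y :: ys).
Proof. intros [l1 [G1 I1]] [l2 [G2 [L2 I2]]]. exists (l1 ++ l2). split. apply good_app; auto.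
  split. simpl; lia. intros [|k] Hk; simpl. apply in_or_app; auto. apply in_or_app; right. apply I2. simpl in Hk; lia. Qed.

Lemma C_comb2 c xs y l1 l2 : good l1 -> good l2 ->
  specP (l1 ++ l2) c xs y -> cert c xs y.
Proof. intros G1 G2 S. exists (trip (enc c) (encL xs) y :: l1 ++ l2). split. apply good_cons.
  apply good_app; auto. eapply specP_mono; eauto. intros u Hu; right; auto. left; auto. Qed.

Lemma C_comp f gs xs ys y : certL gs xs ys -> cert f ys y -> cert (CComp f gs) xs y.
Proof. intros [l1 [G1 [L1 I1]]] [l2 [G2 I2]]. apply (C_comb2 _ _ _ l1 l2); auto. cbn [specP].
  exists ys. split. apply in_or_app; auto. split; auto. intros k Hk. apply in_or_app; auto. Qed.

Lemma C_rec0 f g xs y : cert f xs y -> cert (CRec f g) (0 :: xs) y.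
Proof. intros [l1 [G1 I1]]. apply (C_comb2 _ _ _ l1 []); auto. intros t []. cbn [specP].
  exists 0, xs. split; auto. left. split; auto. apply in_or_app; auto. Qed.

Lemma C_recS f g n xs r y : cert (CRec f g) (n :: xs) r -> cert g (n :: r :: xs) y ->
  cert (CRec f g) (S n :: xs) y.
Proof. intros [l1 [G1 I1]] [l2 [G2 I2]]. apply (C_comb2 _ _ _ l1 l2); auto. cbn [specP].
  exists (S n), xs. split; auto. right. exists n, r. split; auto. split; apply in_or_app; auto. Qed.

Lemma collect (f : code) xs y : (forall z, z < y -> exists v, cert f (z :: xs) (S v)) ->
  exists l, good l /\ forall z, z < y -> exists v, In (trip (enc f) (encL (z :: xs)) (S v)) l.
Proof. induction y; intros H. exists []. split. intros t []. intros; lia.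
  destruct IHy as [l1 [G1 I1]]. intros z Hz; apply H; lia.
  destruct (H y ltac:(lia)) as [v [l2 [G2 I2]]]. exists (l1 ++ l2). split. apply good_app; auto.
  intros z Hz. destruct (Nat.eq_dec z y). subst. exists v. apply in_or_app; auto.
  destruct (I1 z ltac:(lia)) as [v' ?]. exists v'. apply in_or_app; auto. Qed.

Lemma C_mu f xs y : cert f (y :: xs) 0 -> (forall z, z < y -> exists v, cert f (z :: xs) (S v)) ->
  cert (CMu f) xs y.
Proof. intros [l1 [G1 I1]] H. destruct (collect f xs y H) as [l2 [G2 I2]].
  apply (C_comb2 _ _ _ l1 l2); auto. cbn [specP]. split. apply in_or_app; auto.
  intros z Hz. destruct (I2 z Hz) as [v ?]. exists v. apply in_or_app; auto. Qed.

Fixpoint complete c xs y (H : eval c xs y) {struct H} : cert c xs y :=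
  match H in eval c xs y return cert c xs y with
  | ev_zero xs => C_base CZero xs 0 eq_refl
  | ev_succ x xs => C_base CSucc (x :: xs) (S x) (ex_intro _ x (ex_intro _ xs (conj eq_refl eq_refl)))
  | ev_proj i xs => C_base (CProj i) xs _ eq_refl
  | ev_comp f gs xs ys y HL Hf => C_comp f gs xs ys y
      ((fix cl gs xs ys (H' : evalL gs xs ys) {struct H'} : certL gs xs ys :=
         match H' in evalL gs xs ys return certL gs xs ys with
         | evL_nil xs => C_nil xs
         | evL_cons g gs xs y ys Hg Hgs => C_cons g gs xs y ys (complete g xs y Hg) (cl gs xs ys Hgs)
         end) gs xs ys HL) (complete f ys y Hf)
  | ev_rec0 f g xs y Hf => C_rec0 f g xs y (complete f xs y Hf)
  | ev_recS f g n xs r y H1 H2 => C_recS f g n xs r y (complete _ _ _ H1) (complete _ _ _ H2)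
  | ev_mu f xs y H0 Hlt => C_mu f xs y (complete _ _ _ H0)
      (fun z Hz => match Hlt z Hz with ex_intro _ v Hv => ex_intro _ v (complete _ _ _ Hv) end)
  end.

Definition VALID := ball (len_ (Var 0)) (Comp JUST [Var 1; nth_ (Var 0) (Var 1)]).
Lemma tr_valid l : tr VALID [encL l] <-> forall t, In t l -> tr JUST [encL l; t].
Proof. unfold VALID. rewrite tr_ball. ds. split.
  - intros H t Ht. apply (In_nth _ _ 0) in Ht. destruct Ht as [j [Hj <-]]. specialize (H j Hj).
    revert H. rewrite tr_comp. ds. auto.
  - intros H j Hj. rewrite tr_comp. ds. apply H. apply nth_In; auto. Qed.

Lemma good_valid l : good l -> forall t, In t l -> tr JUST [encL l; t].
Proof. intros G t Ht. destruct (G t Ht) as [c [xs [y [-> S]]]]. apply just_spec. auto. Qed.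


Fixpoint det c xs y1 (H1 : eval c xs y1) {struct H1} : forall y2, eval c xs y2 -> y1 = y2
with detL gs xs ys1 (H1 : evalL gs xs ys1) {struct H1} : forall ys2, evalL gs xs ys2 -> ys1 = ys2.
Proof.
  - destruct H1 as [| | |f gs xs ys y HL Hf|f g xs y Hf|f g n xs r y Hr Hg|f xs y H0 Hlt];
      intros y2 H2; inversion H2; subst; auto.
    + match goal with H : evalL _ _ ?z |- _ => pose proof (detL _ _ _ HL _ H) end. subst.
      match goal with H : eval f _ y2 |- _ => exact (det _ _ _ Hf _ H) end.
    + match goal with H : eval f _ y2 |- _ => exact (det _ _ _ Hf _ H) end.
    + match goal with H : eval (CRec _ _) _ ?z |- _ => pose proof (det _ _ _ Hr _ H) end. subst.
      match goal with H : eval g _ y2 |- _ => exact (det _ _ _ Hg _ H) end.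
    + destruct (lt_eq_lt_dec y y2) as [[Hl|Heq]|Hgt]; auto.
      * match goal with H : forall z, z < y2 -> _ |- _ => destruct (H y Hl) as [v Hv] end.
        pose proof (det _ _ _ H0 _ Hv). discriminate.
      * destruct (Hlt y2 Hgt) as [v Hv].
        match goal with H : eval f (y2 :: _) 0 |- _ => pose proof (det _ _ _ Hv _ H) end. discriminate.
  - destruct H1 as [|g gs xs y ys Hg Hgs]; intros ys2 H2; inversion H2; subst; auto.
    match goal with H : eval g _ _ |- _ => pose proof (det _ _ _ Hg _ H) end.
    match goal with H : evalL gs _ _ |- _ => pose proof (detL _ _ _ Hgs _ H) end. subst. auto.
Qed.


Definition POW2 := Fold (Var 0) (Succ Zero) (Add (Var 1) (Var 1)).
Definition pow2_ a := Comp POW2 [a].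
Lemma den_pow2 a env : den (pow2_ a) env = 2 ^ (den a env).
Proof. unfold pow2_. cbn [den map]. generalize (den a env) as n. intros n.
  induction n. reflexivity. change (den POW2 [n] + den POW2 [n] = 2 ^ S n). rewrite IHn. simpl. lia. Qed.

Definition query e := encL [2 ^ S e; 2 ^ e].
Definition GOOD := AND (Comp VALID [Var 1])
  (mem_ (Var 1) (trip_ (Var 0) (cons_ (pow2_ (Succ (Var 0))) (cons_ (pow2_ (Var 0)) Zero)) Zero)).
Definition Good e w := tr GOOD [e; w].
Lemma Good_spec e w : Good e w <-> (forall t, In t (decL w) -> tr JUST [w; t]) /\ In (trip e (query e) 0) (decL w).
Proof. unfold Good, GOOD. rewrite tr_and, tr_comp, tr_mem'. cbn [map den nth].
  rewrite <- (encL_decL w) at 1. rewrite tr_valid. rewrite encL_decL. rewrite den_trip, !den_cons, !den_pow2.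
  cbn [den nth]. reflexivity. Qed.

Definition GOODMIN := AND (Comp GOOD [Var 0; Var 1]) (ball (Var 1) (NOT (Comp GOOD [Var 1; Var 0]))).
Definition GoodMin e w := Good e w /\ forall w', w' < w -> ~ Good e w'.
Lemma GoodMin_spec e w : tr GOODMIN [e; w] <-> GoodMin e w.
Proof. unfold GOODMIN, GoodMin. rewrite tr_and, tr_comp, tr_ball. cbn [map den nth]. fold (Good e w).
  apply and_iff_compat_l. split; intros H w' Hw; specialize (H w' Hw); revert H; rewrite tr_not, tr_comp;
  cbn [map den nth]; auto. Qed.

Definition DEC0 := (bex (Succ (Var 0)) (AND (EQ (Var 1) (Add (Var 0) (Var 0)))
  (OR (isz (Var 0)) (bex (Succ (Var 0)) (bex (Succ (Var 1))
     (AND (EQ (Var 2) (mul (pow2_ (Var 1)) (Succ (Add (Var 0) (Var 0))))) (Comp GOODMIN [Var 1; Var 0]))))))).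
Definition DEC := nz DEC0.

Definition Anat (h : nat) := h = 0 \/ exists e w, h = 2 ^ e * (2 * w + 1) /\ GoodMin e w.

Lemma DEC_spec m : tr DEC [m] <-> exists h, m = h + h /\ Anat h.
Proof. unfold DEC, DEC0. rewrite tr_nz, tr_bex. cbn [den nth]. split.
  - intros [h [Hh H]]. rewrite tr_and, tr_eq, tr_or, tr_isz in H. cbn [den nth] in H.
    destruct H as [E H]. exists h. split; auto. unfold Anat. destruct H as [H|H].
    + left. unfold tr in H. cbn [den nth] in H. lia.
    + right. rewrite tr_bex in H. destruct H as [e [He H]]. rewrite tr_bex in H. destruct H as [w [Hw H]].
      rewrite tr_and, tr_eq, tr_comp in H. cbn [den nth map] in *. rewrite GoodMin_spec in H.
      rewrite den_mul, den_pow2 in H. cbn [den nth] in H. destruct H. exists e, w. split; auto. lia.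
  - intros [h [E H]]. exists h. split. lia. rewrite tr_and, tr_eq, tr_or, tr_isz. cbn [den nth]. split. lia.
    destruct H as [H|[e [w [Hh G]]]]. left. unfold tr. cbn [den nth]. lia.
    right. rewrite tr_bex. exists e. split.
    + cbn [den nth]. assert (e < 2 ^ e) by (apply Nat.pow_gt_lin_r; lia). nia.
    + rewrite tr_bex. exists w. split. cbn [den nth]. assert (1 <= 2 ^ e) by (apply Nat.pow_le_mono_r with (a:=2) (b:=0); lia). nia.
      rewrite tr_and, tr_eq, tr_comp. cbn [den nth map]. rewrite GoodMin_spec. rewrite den_mul, den_pow2.
      cbn [den nth]. split; auto. lia.
Qed.

Lemma uniq2 a u b v : 2 ^ a * (2 * u + 1) = 2 ^ b * (2 * v + 1) -> a = b /\ u = v.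
Proof.
  revert b u v. induction a; intros [|b] u v H; simpl in H.
  - lia.
  - assert (2 ^ b >= 1) by (pose proof (Nat.pow_le_mono_r 2 0 b); simpl in *; lia). nia.
  - assert (2 ^ a >= 1) by (pose proof (Nat.pow_le_mono_r 2 0 a); simpl in *; lia). nia.
  - assert (2 ^ a * (2 * u + 1) = 2 ^ b * (2 * v + 1)) by lia. apply IHa in H0. lia.
Qed.

Lemma GoodMin_uniq e w w' : GoodMin e w -> GoodMin e w' -> w = w'.
Proof. intros [G1 M1] [G2 M2]. destruct (lt_eq_lt_dec w w') as [[H|H]|H]; auto.
  exfalso; apply (M2 w H G1). exfalso; apply (M1 w' H G2). Qed.

Lemma Good_dec e w : Good e w \/ ~ Good e w.
Proof. unfold Good, tr. destruct (Nat.eq_dec (den GOOD [e; w]) 0); auto. Qed.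

Lemma exists_min e w : Good e w -> exists w0, GoodMin e w0.
Proof. induction w as [w IH] using (well_founded_induction lt_wf). intros G.
  assert (H : (exists w', w' < w /\ Good e w') \/ ~ (exists w', w' < w /\ Good e w')).
  { clear IH G. induction w. right. intros [w' [H _]]; lia.
    destruct IHw as [[w' [H1 H2]]|H]. left; exists w'; split; auto; lia.
    destruct (Good_dec e w). left; exists w; auto. right. intros [w' [H1 H2]].
    destruct (Nat.eq_dec w' w). subst; auto. apply H. exists w'; split; auto; lia. }
  destruct H as [[w' [H1 H2]]|H]. apply (IH w' H1 H2).
  exists w. split; auto. intros w' Hw G'. apply H. eauto. Qed.

Lemma mod_char x e : x mod 2 ^ S e = 2 ^ e <-> exists q, x = 2 ^ e * (2 * q + 1).
Proof.
  assert (P : 2 ^ S e = 2 * 2 ^ e) by reflexivity.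
  assert (Hp : 2 ^ e >= 1) by (pose proof (Nat.pow_le_mono_r 2 0 e); simpl in *; lia).
  split.
  - intros H. exists (x / 2 ^ S e). pose proof (Nat.div_mod x (2 ^ S e) ltac:(lia)). rewrite H in H0.
    rewrite P in *. nia.
  - intros [q ->]. symmetry. apply (Nat.mod_unique _ _ q). lia. rewrite P. nia.
Qed.

Definition Aset (z : Z) : Prop := exists h, z = Z.of_nat h /\ Anat h.

Lemma den_nz01 a env : den (nz a) env = if den a env =? 0 then 0 else 1.
Proof. unfold nz. rewrite !den_isz. destruct (den a env =? 0); reflexivity. Qed.

Lemma Aset_dec z : Aset z <-> tr DEC [Z_to_nat z].
Proof. rewrite DEC_spec. unfold Z_to_nat, Aset. destruct (Z.leb_spec 0 z).
  - split.
    + intros [h [-> Hh]]. exists h. split; auto. lia.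
    + intros [h [E Hh]]. exists h. split; auto. lia.
  - split.
    + intros [h [-> _]]. lia.
    + intros [h [E _]]. lia.
Qed.

Lemma recursive_A : recursive_Zset Aset.
Proof. exists (compile 1 DEC). intros z. pose proof (compile_ok DEC 1 [Z_to_nat z] eq_refl) as H.
  rewrite Aset_dec. unfold tr. unfold DEC in *. rewrite den_nz01 in *.
  destruct (den DEC0 [Z_to_nat z] =? 0); split; intros; auto; try congruence; exfalso; auto.
Qed.


Lemma bound_lemma T : exists B, forall e w, e < T -> GoodMin e w -> 2 ^ e * (2 * w + 1) < B.
Proof. induction T. exists 0. intros; lia.
  destruct IHT as [B HB]. destruct (classic (exists w, GoodMin T w)) as [[w0 H0]|N].
  - exists (B + 2 ^ T * (2 * w0 + 1) + 1). intros e w He G. destruct (Nat.eq_dec e T).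
    + subst. rewrite (GoodMin_uniq _ _ _ G H0). lia.
    + specialize (HB e w ltac:(lia) G). lia.
  - exists B. intros e w He G. destruct (Nat.eq_dec e T). subst. exfalso; eauto. apply HB; auto; lia.
Qed.

Lemma A0 : Aset 0%Z.
Proof. exists 0. split; auto. left; auto. Qed.

Lemma pow_gt_id (n : nat) : (Z.of_nat n < 2 ^ Z.of_nat n)%Z.
Proof. replace (2 ^ Z.of_nat n)%Z with (Z.of_nat (2 ^ n)) by (rewrite Nat2Z.inj_pow; reflexivity).
  apply Nat2Z.inj_lt. apply Nat.pow_gt_lin_r. lia. Qed.

Lemma closed_A : profinite_closed Aset.
Proof.
  intros y Hy. assert (Hy0 : y <> 0%Z) by (intro; subst; apply Hy, A0).
  set (T := Z.to_nat (Z.abs y)).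
  destruct (bound_lemma T) as [B HB].
  set (Bz := (Z.of_nat B + Z.abs y + 1)%Z).
  set (P2 := (2 ^ Z.of_nat T)%Z).
  assert (HP2 : (Z.abs y < P2)%Z) by (unfold P2, T; pose proof (pow_gt_id (Z.to_nat (Z.abs y))); lia).
  exists y, (P2 * Bz)%Z. split; [|split].
  - unfold Bz. nia.
  - exists 0%Z. ring.
  - intros y' [k ->] [h [Eh Ah]]. destruct Ah as [->|[e [w [Eh2 G]]]].
    + assert (k <> 0%Z) by (intro; subst; apply Hy0; lia).
      unfold Bz in *. nia.
    + destruct (lt_dec e T) as [Het|Het].
      * specialize (HB e w Het G). rewrite <- Eh2 in HB.
        destruct (Z.eq_dec k 0) as [->|Hk].
        -- apply Hy. exists h. split. lia. right. exists e, w. auto.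
        -- apply Nat2Z.inj_lt in HB. unfold Bz in *. nia.
      * assert (Hd : exists q, h = 2 ^ T * q).
        { exists (2 ^ (e - T) * (2 * w + 1)). rewrite Eh2, Nat.mul_assoc, <- Nat.pow_add_r.
          f_equal. f_equal. lia. }
        destruct Hd as [q ->]. rewrite Nat2Z.inj_mul, Nat2Z.inj_pow in Eh. change (Z.of_nat 2) with 2%Z in Eh. fold P2 in Eh.
        assert (y = P2 * (Z.of_nat q - Bz * k))%Z by lia.
        assert (Z.of_nat q - Bz * k <> 0)%Z by (intro; apply Hy0; nia).
        nia.
Qed.

Lemma modset_iff c : mod_set Aset (2 ^ S (enc c)) (2 ^ enc c) <-> eval c [2 ^ S (enc c); 2 ^ enc c] 0.
Proof.
  set (e := enc c).
  assert (Hp : 2 ^ e >= 1) by (pose proof (Nat.pow_le_mono_r 2 0 e); simpl in *; lia).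
  unfold mod_set. split.
  - intros [_ [x [[h [-> Ah]] Hm]]]. rewrite <- Nat2Z.inj_mod in Hm. apply Nat2Z.inj in Hm.
    destruct Ah as [->|[e' [w [Eh [G _]]]]].
    + rewrite Nat.mod_0_l in Hm. lia. simpl. lia.
    + apply mod_char in Hm. destruct Hm as [q Hq]. rewrite Hq in Eh. apply uniq2 in Eh. destruct Eh as [<- _].
      apply Good_spec in G. destruct G as [V I].
      apply (sound (decL w)). rewrite encL_decL. exact V. exact I.
  - intros H. destruct (complete _ _ _ H) as [l [G I]].
    assert (Gw : Good e (encL l)). { apply Good_spec. rewrite decL_encL. split; auto.
      intros t Ht. apply good_valid; auto. }
    destruct (exists_min _ _ Gw) as [w Gm]. split. simpl; lia.
    exists (Z.of_nat (2 ^ e * (2 * w + 1))). split. exists (2 ^ e * (2 * w + 1)). split; auto. right; eauto.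
    rewrite <- Nat2Z.inj_mod. f_equal. apply mod_char. eauto.
Qed.

Theorem mainTheorem19 :
  exists A : Z -> Prop,
    recursive_Zset A /\ profinite_closed A /\ ~ recursive_mod_map A.
Proof.
  exists Aset. split. apply recursive_A. split. apply closed_A.
  intros [c Hc]. destruct (Hc (2 ^ S (enc c)) (2 ^ enc c)) as [H1 H0].
  { pose proof (Nat.pow_le_mono_r 2 0 (S (enc c))); simpl in *; lia. }
  destruct (classic (mod_set Aset (2 ^ S (enc c)) (2 ^ enc c))) as [M|M].
  - pose proof (H1 M). apply modset_iff in M. pose proof (det _ _ _ H _ M). discriminate.
  - apply M. apply modset_iff. apply H0. exact M.
Qed.
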